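(* Let $S$ be a right non-degenerate semigroup of skew type. Then for every $x,y\in S$ there exist $t,w\in S$ such that $|w|=|y|$ and $xw=yt$.
   Context: A semigroup of skew type is a monoid $S$ with a monoid presentation $S=\langle x_1,\ldots,x_n \mid x_ix_j=x_kx_l\rangle$ consisting of $\binom{n}{2}$ relations, each of the form $x_ix_j=x_kx_l$ with $i\neq j$, $k\neq l$, such that every word $x_px_q$ with $p\neq q$ appears (as one side) in exactly one of the relations; $X=\{x_1,\ldots,x_n\}$. Since relations are homogeneous, the length $|s|$ of $s\in S$ as a word in the generators is well defined. For $a,b\in X$, the partner of $ab$ is the other side of the unique defining relation containing $ab$ if $a\neq b$, and $ab$ itself if $a=b$. $S$ is right non-degenerate if for every $x\in X$ the map $X\to X$ sending $y$ to the first letter of the partner of $xy$ is surjective. *)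

(* Defs.v *)
From mathcomp Require Import all_boot.
Set Implicit Arguments. Unset Strict Implicit. Unset Printing Implicit Defensive.

(* Generators x_1..x_n are indexed by 'I_n; a word in the free monoid is a
   seq 'I_n. A defining relation x_i x_j = x_k x_l is a pair ((i,j),(k,l)). *)
Definition gen2 (n : nat) := ('I_n * 'I_n)%type.
Definition relation2 (n : nat) := (gen2 n * gen2 n)%type.

Definition skew_type (n : nat) (rels : seq (relation2 n)) : Prop :=
  [/\ size rels = 'C(n, 2),
      all (fun r : relation2 n => (r.1.1 != r.1.2) && (r.2.1 != r.2.2)) rels &
      forall p q : 'I_n, p != q ->
        count (fun r : relation2 n => (r.1 == (p, q)) || (r.2 == (p, q))) rels = 1].

(* Congruence on words generated by the relations: the monoid S is the
   quotient of seq 'I_n by this relation. *)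
Inductive rel_step (n : nat) (rels : seq (relation2 n)) : seq 'I_n -> seq 'I_n -> Prop :=
  | RStep u v (r : relation2 n) : r \in rels ->
      rel_step rels (u ++ [:: r.1.1; r.1.2] ++ v) (u ++ [:: r.2.1; r.2.2] ++ v).

Inductive congr_rel (n : nat) (rels : seq (relation2 n)) : seq 'I_n -> seq 'I_n -> Prop :=
  | CRefl w : congr_rel rels w w
  | CStep w1 w2 : rel_step rels w1 w2 -> congr_rel rels w1 w2
  | CSym w1 w2 : congr_rel rels w1 w2 -> congr_rel rels w2 w1
  | CTrans w1 w2 w3 : congr_rel rels w1 w2 -> congr_rel rels w2 w3 -> congr_rel rels w1 w3.

Definition partner (n : nat) (rels : seq (relation2 n)) (a b : 'I_n) : gen2 n :=
  if a == b then (a, b) else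
  let r := nth ((a, b), (a, b)) rels
               (find (fun r : relation2 n => (r.1 == (a, b)) || (r.2 == (a, b))) rels) in
  if r.1 == (a, b) then r.2 else r.1.

Definition right_nondegenerate (n : nat) (rels : seq (relation2 n)) : Prop :=
  forall x : 'I_n, forall z : 'I_n, exists y : 'I_n, (partner rels x y).1 = z.

(* Main.v *)
Require Import Defs.
From mathcomp Require Import all_boot.
From mathcomp Require Import zify.

Section S.
Variables (n : nat) (rels : seq (relation2 n)).

Lemma congr_catl p u v : congr_rel rels u v -> congr_rel rels (p ++ u) (p ++ v).
Proof.
elim=> [w|w1 w2 st|w1 w2 _ IH|w1 w2 w3 _ IH1 _ IH2].
- exact: CRefl.
- case: st => u' v0 r rin; apply: CStep.
  by have := RStep (p ++ u') v0 rin; rewrite -!catA.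
- exact: CSym.
- exact: CTrans IH1 IH2.
Qed.

Lemma congr_catr q u v : congr_rel rels u v -> congr_rel rels (u ++ q) (v ++ q).
Proof.
elim=> [w|w1 w2 st|w1 w2 _ IH|w1 w2 w3 _ IH1 _ IH2].
- exact: CRefl.
- case: st => u' v' r rin; apply: CStep.
  rewrite -!catA; exact: RStep.
- exact: CSym.
- exact: CTrans IH1 IH2.
Qed.

Lemma partner_congr (Hsk : skew_type rels) a c :
  congr_rel rels [:: a; c] [:: (partner rels a c).1; (partner rels a c).2].
Proof.
rewrite /partner. case: eqP => [<-|/eqP ne]; first exact: CRefl.
case: Hsk => _ _ /(_ a c ne) Hc.
have Hh : has (fun r : relation2 n => (r.1 == (a, c)) || (r.2 == (a, c))) rels.
  by rewrite has_count Hc.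
set r := nth _ _ _.
have rin : r \in rels by rewrite /r mem_nth // -has_find.
have Pr : (r.1 == (a,c)) || (r.2 == (a,c)) by rewrite /r; apply: (nth_find _ Hh).
have step := RStep [::] [::] rin.
rewrite /= in step.
case: ifP => [/eqP e1 | e1].
- rewrite e1 /= in step; exact: CStep.
- rewrite e1 /= in Pr; move/eqP: Pr => e2.
  rewrite e2 /= in step; apply: CSym; exact: CStep.
Qed.

Lemma grid (Hsk : skew_type rels) (Hnd : right_nondegenerate rels) N :
  forall x y : seq 'I_n, size x + size y <= N -> exists t w : seq 'I_n,
    [/\ size w = size y, size t = size x & congr_rel rels (x ++ w) (y ++ t)].
Proof.
elim: N => [|N IH] x y.
  case: x => // ; case: y => // _. exists [::], [::]; split => //; exact: CRefl.
case: x => [|a x'] Hs.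
  exists [::], y; rewrite cats0; split => //; exact: CRefl.
case: y Hs => [|b y'] Hs.
  exists (a :: x'), [::]; rewrite cats0; split => //; exact: CRefl.
have [c Hc] := Hnd a b.
have L1 := partner_congr Hsk a c.
rewrite Hc in L1.
set d := (partner rels a c).2 in L1.
have [t1 [w1 [Hw1 Ht1 C1]]] := IH x' [:: c] ltac:(rewrite /= in Hs *; lia).
have [t2 [w2 [Hw2 Ht2 C2]]] := IH (d :: t1) y' ltac:(rewrite /= Ht1 in Hs *; lia).
exists t2, (w1 ++ w2); split.
- by rewrite size_cat Hw1 Hw2.
- by rewrite Ht2 /= Ht1.
- rewrite catA.
  apply: (CTrans (w2 := a :: c :: t1 ++ w2)).
    by have H := congr_catr w2 _ _ (congr_catl [:: a] _ _ C1); rewrite /= in H *.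
  apply: (CTrans (w2 := b :: d :: t1 ++ w2)).
    by have H := congr_catr (t1 ++ w2) _ _ L1; rewrite /= in H *.
  by have H := congr_catl [:: b] _ _ C2; rewrite /= in H *.
Qed.

End S.

Theorem lemma4p2 (n : nat) (rels : seq (relation2 n)) :
  skew_type rels -> right_nondegenerate rels ->
  forall x y : seq 'I_n, exists t w : seq 'I_n,
    size w = size y /\ congr_rel rels (x ++ w) (y ++ t).
Proof.
move=> Hsk Hnd x y.
have [t [w [H1 _ H3]]] := @grid n rels Hsk Hnd _ x y (leqnn (size x + size y)).
by exists t, w.
Qed.
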